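(* Let $G$ be a finite group and let $M,N$ be normal subgroups of $G$ with $1\neq M<N$. The following are equivalent: (1) every $g\in G\setminus N$ is conjugate in $G$ to every element of $gM$; (2) $|C_G(g)|=|C_{G/M}(Mg)|$ for every $g\in G\setminus N$; (3) for every $g\in G\setminus N$ we have $\chi(g)=0$ for all $\chi\in\mathrm{Irr}(G\mid M)$; (4) $V(G\mid M)\le N$; (5) for all $g\in G\setminus N$ and all $z\in M$ there exists $y\in G$ with $[g,y]=z$.
   Context: $\mathrm{Irr}(G)$ denotes the set of complex irreducible characters of $G$, and $\mathrm{Irr}(G\mid M)=\{\chi\in\mathrm{Irr}(G)\mid M\not\le\ker\chi\}$. The vanishing-off subgroup $V(G\mid M)$ is the subgroup of $G$ generated by all elements $g\in G$ such that $\chi(g)\neq 0$ for some $\chi\in\mathrm{Irr}(G\mid M)$. The commutator is $[g,y]=g^{-1}y^{-1}gy$. *)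

(* Defs.v *)
From mathcomp Require Import all_boot all_order all_algebra all_fingroup all_solvable all_field all_character.
Set Implicit Arguments. Unset Strict Implicit. Unset Printing Implicit Defensive.
Import GRing.Theory Num.Theory.
Local Open Scope group_scope.

Definition in_Irr_rel (gT : finGroupType) (G M : {group gT}) (i : Iirr G) : bool :=
  ~~ (M \subset cfker ('chi[G]_i)%R).

Definition vanishing_off (gT : finGroupType) (G M : {group gT}) : {set gT} :=
  <<[set g in G | [exists i : Iirr G, in_Irr_rel M i && (('chi[G]_i)%R g != 0)%R]]>>.

(* Main.v *)
Require Import Defs.
From mathcomp Require Import all_boot all_order all_algebra all_fingroup all_solvable all_field all_character.
Local Open Scope group_scope.
Import GRing.Theory Num.Theory.

Lemma rcosets_partition_mul_set (gT : finGroupType) (G : {set gT}) (H : {group gT}) : partition (rcosets H G) (H * G).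
Proof.
set HG := H * G; have sGHG: {subset G <= HG} by apply/subsetP/mulG_subr.
have defHx x: x \in HG -> [set y in HG | rcoset H x == rcoset H y] = H :* x.
  move=> HGx; apply/setP=> y; rewrite inE !rcosetE (sameP eqP rcoset_eqP).
  by rewrite rcoset_sym; apply/andb_idl/subsetP; rewrite mulGS sub1set.
have:= preim_partitionP (rcoset H) HG; congr (partition _ _); apply/setP=> Hx.
apply/imsetP/idP=> [[x HGx ->] | ]; first by rewrite defHx // mem_rcosets.
by case/rcosetsP=> x /sGHG-HGx ->; exists x; rewrite ?defHx.
Qed.
Lemma card_mul_set (gT : finGroupType) (K : {set gT}) (M : {group gT}) :
  K \subset 'N(M) -> #|M * K| = (#|M| * #|K / M|)%N.
Proof.
move=> nMK.
rewrite (card_uniform_partition (n:=#|M|) _ (rcosets_partition_mul_set _ K M)); last first.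
  by move=> _ /rcosetsP[x Hx ->]; rewrite card_rcoset.
rewrite mulnC; congr (_ * _)%N.
rewrite quotientE morphimEsub // /rcosets -(card_imset _ (@val_inj _ _ (coset_of M))) -imset_comp.
congr #|pred_of_set _|; apply: eq_in_imset => x Kx /=.
by rewrite val_coset ?(subsetP nMK) // rcosetE.
Qed.

Section Helpers.
Variables (gT : finGroupType) (G M : {group gT}).
Hypothesis nMG : M <| G.

Lemma AE g : (forall m, m \in M -> g * m \in g ^: G) <->
   (forall z, z \in M -> exists2 y, y \in G & [~ g, y] = z).
Proof.
split=> H z Mz.
  have /imsetP[y Gy Ey] := H z Mz.
  by exists y => //; rewrite /commg -Ey mulKg.
have [y Gy Ey] := H z Mz.
by rewrite -Ey /commg mulKVg memJ_class.
Qed.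

Lemma BC g : g \in G -> (#|'C_G[g]| = #|'C_(G / M)[coset M g]|) <->
   (forall i : Iirr G, in_Irr_rel M i -> ('chi[G]_i)%R g = 0%R).
Proof.
move=> Gg.
have E : (#|'C_G[g]|%:R = #|'C_(G / M)[coset M g]|%:R +
    \sum_(i | ~~ (M \subset cfker 'chi[G]_i)) `|'chi[G]_i g| ^+ 2 :> algC)%R.
  move: (second_orthogonality_relation g Gg); rewrite mulrb class_refl => <-.
  have GHx: coset M g \in (G / M)%g by apply: mem_quotient.
  move: (second_orthogonality_relation (coset M g) GHx).
  rewrite mulrb class_refl => <-.
  rewrite -2!(eq_bigr _ (fun _ _ => normCK _)) sum_norm_irr_quo //.
  by rewrite (bigID (fun i => M \subset cfker ('chi[G]_i)%R)).
split=> [Heq | H0].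
  have S : (\sum_(i | ~~ (M \subset cfker ('chi[G]_i)%R)) `|('chi[G]_i)%R g| ^+ 2 = 0 :> algC)%R.
    by apply: (@addrI _ (#|'C_(G / M)[coset M g]|%:R)%R); rewrite addr0 -E Heq.
  move=> i Ri.
  have := psumr_eq0P (fun j _ => exprn_ge0 2 (normr_ge0 _)) S Ri.
  by move=> /eqP; rewrite expf_eq0 normr_eq0 => /andP[_ /eqP].
apply/eqP; rewrite -(eqr_nat algC) E big1 ?addr0 // => i Ri.
by rewrite H0 // normr0 expr0n.
Qed.

Lemma AB g : g \in G -> (forall m, m \in M -> g * m \in g ^: G) <->
   (#|'C_G[g]| = #|'C_(G / M)[coset M g]|).
Proof.
move=> Gg; have [sMG nMG'] := andP nMG.
have nMg : g \in 'N(M) by apply: (subsetP nMG').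
set K := g ^: G.
have nMK : K \subset 'N(M) by apply: subset_trans nMG'; apply: class_subG.
have KM : K / M = coset M g ^: (G / M) by apply: quotient_class.
have P : #|M * K| = (#|M| * #|K / M|)%N by apply: card_mul_set.
have cK : (#|'C_G[g]| * #|K|)%N = #|G| by rewrite -index_cent1 Lagrange ?subsetIl.
have cKM : (#|'C_(G / M)[coset M g]| * #|K / M|)%N = #|G / M|.
  by rewrite KM -index_cent1 Lagrange ?subsetIl.
have cG : #|G| = (#|M| * #|G / M|)%N by rewrite card_quotient // Lagrange.
have sKP : K \subset M * K by apply: mulG_subr.
have MKC : M * K = K * M by rewrite (normC nMK).
have eqB : (#|'C_G[g]| = #|'C_(G / M)[coset M g]|) <-> #|K| = #|M * K|.
  have K0 : (0 < #|K|)%N by apply/card_gt0P; exists g; apply: class_refl.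
  have KM0 : (0 < #|K / M|)%N by apply/card_gt0P; exists (coset M g); rewrite KM class_refl.
  rewrite P; split=> H.
    apply/eqP; rewrite -(eqn_pmul2l (cardG_gt0 'C_G[g])) cK cG -cKM H.
    by rewrite mulnCA.
  apply/eqP; rewrite -(eqn_pmul2r K0) cK H mulnCA cKM cG.
  by [].
split=> [H | /eqB H].
  apply/eqB; suff sPK : M * K \subset K by apply/eqP; rewrite eqn_leq !subset_leq_card.
  apply/subsetP=> x.
  rewrite MKC => /mulsgP[k m Kk Mm ->].
  have /imsetP[y Gy ->] := Kk.
  have nMy : y^-1 \in 'N(M) by apply: (subsetP nMG'); rewrite groupV.
  have Mm' : m ^ y^-1 \in M by rewrite memJ_norm.
  have -> : g ^ y * m = (g * m ^ y^-1) ^ y by rewrite conjMg conjgKV.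
  have /imsetP[w Gw ->] := H _ Mm'.
  by rewrite -conjgM memJ_class ?groupM.
move=> m Mm; have : g * m \in K * M by rewrite mem_mulg ?class_refl.
have eqs : K = M * K by apply/eqP; rewrite eqEcard sKP -H leqnn.
by rewrite -MKC -eqs.
Qed.

End Helpers.

Theorem mainTheorem6 (gT : finGroupType) (G M N : {group gT})
  (nMG : M <| G) (nNG : N <| G) (ntM : M :!=: 1) (ltMN : M \proper N) :
  [<->
    (forall g, g \in G :\: N -> forall m, m \in M -> g * m \in g ^: G);
    (forall g, g \in G :\: N -> #|'C_G[g]| = #|'C_(G / M)[coset M g]|);
    (forall g, g \in G :\: N -> forall i : Iirr G, in_Irr_rel M i -> ('chi[G]_i)%R g = 0%R);
    (vanishing_off G M \subset N);
    (forall g, g \in G :\: N -> forall z, z \in M -> exists2 y, y \in G & [~ g, y] = z)].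
Proof.
have Gof g : g \in G :\: N -> g \in G by case/setDP.
tfae.
- by move=> H g Hg; apply/(@AB _ G M nMG g (Gof g Hg)); apply: H.
- by move=> H g Hg; apply/(@BC _ G M nMG g (Gof g Hg)); apply: H.
- move=> H; rewrite /vanishing_off gen_subG; apply/subsetP=> x.
  rewrite inE => /andP[Gx /existsP[i /andP[Ri nz]]].
  apply: contraR nz => Nx; by rewrite H // inE Nx Gx.
- move=> H g Hg; have Gg := Gof g Hg.
  apply/(@AE _ G M g); apply/(@AB _ G M nMG g Gg); apply/(@BC _ G M nMG g Gg) => i Ri.
  apply/eqP; apply: contraR (setDP Hg).2 => nz.
  apply: (subsetP H); rewrite /vanishing_off; apply: mem_gen.
  by rewrite inE Gg; apply/existsP; exists i; rewrite Ri.
- by move=> H g Hg; apply/(@AE _ G M g); apply: H.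
Qed.
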